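(* Let $n\ge 3$ and consider the game with players $N=\{1,\dots,n\}$, strategy sets $[0,1]$ and payoffs $\pi_i(x)=x_i(1-X_N)$, $X_N=\sum_{j\in N}x_j$. Let $C\subset N$ be a coalition of cooperators with $|C|=m$, $1\le m\le n-1$, acting as a Stackelberg leader (PCLE as defined below). Then: (i) for any $x^C$ with $X_C=\sum_{i\in C}x_i<1$, the non-cooperators' game has the unique Nash equilibrium $x_j=\frac{1-X_C}{n-m+1}$ for all $j\in N\setminus C$; (ii) in every PCLE, $X_C=\tfrac12$ and each non-cooperator extracts $\frac{1}{2(n-m+1)}$, so $X_N=1-\frac{1}{2(n-m+1)}$; if cooperators split equally, each cooperator extracts $\frac{1}{2m}$ and the payoffs are $\pi^L_C(m)=\frac{1}{4m(n-m+1)}$ for cooperators and $\pi^L_{NC}(m)=\frac{1}{4(n-m+1)^2}$ for non-cooperators. (iii) Defining, via these formulas (with $\pi^L_C(n)=\tfrac{1}{4n}$ the symmetric socially optimal payoff), a coalition size $m\in\{2,\dots,n-1\}$ to be stable if $\pi^L_{NC}(m)\ge\pi^L_C(m+1)$ and $\pi^L_C(m)\ge\pi^L_{NC}(m-1)$, the size $m$ is stable if and only if $$\frac{m+1}{n-m+1}\ge\frac{n-m+1}{n-m}\qquad\text{and}\qquad\frac{n-m+2}{n-m+1}\ge\frac{m}{n-m+2}.$$ In particular, for $n=8$ the coalition size $m=5$ is stable.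
   Context: For a coalition $C\subset N$ of cooperators, given a joint choice $x^C\in[0,1]^C$, let $\mathrm{NE}(x^C)$ be the set of Nash equilibria of the game among $N\setminus C$ with payoffs $x^{N\setminus C}\mapsto\pi_j(x^{N\setminus C},x^C)$. Let $\tilde\pi(x^C)=\min_{x^{N\setminus C}\in\mathrm{NE}(x^C)}\sum_{i\in C}\pi_i(x^{N\setminus C},x^C)$. A partial cooperative leadership equilibrium (PCLE) is a profile $(x^{N\setminus C}_*,x^C_* )$ with $x^C_*$ maximizing $\tilde\pi$ over $[0,1]^C$ and $x^{N\setminus C}_*$ minimizing $\sum_{i\in C}\pi_i(\cdot,x^C_* )$ over $\mathrm{NE}(x^C_* )$. *)

(* Defs.v *)
From HB Require Import structures.
From mathcomp Require Import all_boot all_order all_algebra.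
From mathcomp Require Import reals.
Set Implicit Arguments. Unset Strict Implicit. Unset Printing Implicit Defensive.
Import Order.TTheory GRing.Theory Num.Theory.
Local Open Scope ring_scope.

Section Game.
Variables (R : realType) (n : nat).

Definition profile := 'I_n -> R.

Definition payoff (x : profile) (i : 'I_n) : R := x i * (1 - \sum_(j < n) x j).

Definition upd (x : profile) (j : 'I_n) (t : R) : profile :=
  fun k => if k == j then t else x k.

Definition isNE (C : {set 'I_n}) (xC y : profile) : Prop :=
  (forall i, i \in C -> y i = xC i) /\
  (forall j, j \notin C ->
     (0 <= y j <= 1) /\ forall t, 0 <= t <= 1 -> payoff (upd y j t) j <= payoff y j).

Definition coalPay (C : {set 'I_n}) (y : profile) : R := \sum_(i in C) payoff y i.

(* v = tilde pi(xC) = min over NE(xC) of the coalition payoff (attained). *)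
Definition tildeIs (C : {set 'I_n}) (xC : profile) (v : R) : Prop :=
  (exists y, isNE C xC y /\ coalPay C y = v) /\
  (forall y, isNE C xC y -> v <= coalPay C y).

Definition onUnitC (C : {set 'I_n}) (x : profile) : Prop :=
  forall i, i \in C -> 0 <= x i <= 1.

Definition isPCLE (C : {set 'I_n}) (x : profile) : Prop :=
  onUnitC C x /\ isNE C x x /\
  exists v, tildeIs C x v /\ coalPay C x = v /\
    (forall xC, onUnitC C xC -> forall w, tildeIs C xC w -> w <= v).

End Game.

Definition piLC (R : realType) (n m : nat) : R :=
  1 / (4 * m%:R * (n - m + 1)%:R).
Definition piLNC (R : realType) (n m : nat) : R :=
  1 / (4 * ((n - m + 1)%:R) ^+ 2).

Definition stable (R : realType) (n m : nat) : Prop :=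
  (2 <= m <= n.-1)%N /\
  piLC R n m.+1 <= piLNC R n m /\ piLNC R n m.-1 <= piLC R n m.

(* Main.v *)
Require Import Defs.
From HB Require Import structures.
From mathcomp Require Import all_boot all_order all_algebra.
From mathcomp Require Import reals.
From mathcomp Require Import ring lra zify.
Import Order.TTheory GRing.Theory Num.Theory.
Local Open Scope ring_scope.
Set Implicit Arguments.

Section H.
Variables (R : realType) (n : nat).

Lemma sum_split (y : profile R n) (C : {set 'I_n}) :
  \sum_(j < n) y j = \sum_(i in C) y i + \sum_(j in ~:C) y j.
Proof.
rewrite (bigID (fun j => j \in C)) /=.
congr (_ + _); apply: eq_bigl => j //=; by rewrite in_setC.
Qed.

Lemma sum_upd (y : profile R n) j t :
  \sum_(k < n) upd y j t k = \sum_(k < n) y k - y j + t.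
Proof.
rewrite (bigD1 j) //= [in RHS](bigD1 j) //= /upd eqxx.
have -> : \sum_(i < n | i != j) (if i == j then t else y i) = \sum_(i < n | i != j) y i.
  by apply: eq_bigr => i /negbTE ->.
lra.
Qed.

Lemma card_compl (C : {set 'I_n}) : #|~:C| = (n - #|C|)%N.
Proof. have h := cardsC C; rewrite card_ord in h; lia. Qed.

Lemma sum_compl_const (C : {set 'I_n}) (c : R) :
  \sum_(j in ~:C) c = (n - #|C|)%N%:R * c.
Proof. by rewrite sumr_const card_compl mulr_natl. Qed.

Lemma payoff_upd (y : profile R n) j t :
  payoff (upd y j t) j = t * (1 - (\sum_(k < n) y k - y j + t)).
Proof. by rewrite /payoff sum_upd /upd eqxx. Qed.

End H.

Lemma br_lt (R : realType) (s a : R) : -1 <= s -> s < 1 -> 0 <= a <= 1 ->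
  (forall t, 0 <= t <= 1 -> t * (1 - (s + t)) <= a * (1 - (s + a))) ->
  a = (1 - s) / 2.
Proof.
move=> h1 h2 /andP[ha1 ha2] H.
have := H ((1 - s)/2) ltac:(apply/andP; split; lra).
move=> h. nra.
Qed.

Lemma br_ge (R : realType) (s a : R) : 1 <= s -> 0 <= a ->
  0 * (1 - (s + 0)) <= a * (1 - (s + a)) -> a = 0.
Proof. move=> h1 h2 h3. nra. Qed.

Lemma frac_le (R : realType) (a b c d : R) : 0 < b -> 0 < d ->
  (a / b <= c / d) = (a * d <= c * b).
Proof.
move=> hb hd. rewrite ler_pdivrMr // mulrAC ler_pdivlMr //.
Qed.


Section NE.
Variables (R : realType) (n : nat).

Lemma NE_fwd (C : {set 'I_n}) (xC y : profile R n) :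
  onUnitC C xC -> \sum_(i in C) xC i < 1 -> isNE C xC y ->
  forall j, j \notin C -> y j = (1 - \sum_(i in C) xC i) / (n - #|C| + 1)%:R.
Proof.
move=> hU hX [hC hN].
set X := \sum_(i in C) xC i in hX *.
have hYC : \sum_(i in C) y i = X by apply: eq_bigr => i /hC.
have X0 : 0 <= X by apply: sumr_ge0 => i /hU /andP[].
set Y := \sum_(j in ~:C) y j.
have hS : \sum_(j < n) y j = X + Y by rewrite (sum_split y C) hYC.
have Yj : forall j, j \notin C -> y j <= Y.
  move=> j hj; rewrite /Y (bigD1 j) ?in_setC //=.
  have : 0 <= \sum_(i in ~: C | i != j) y i.
    apply: sumr_ge0 => i /andP[hi _]; rewrite in_setC in hi.
    by have [/andP[]] := hN i hi.
  lra.
have key : forall j, j \notin C -> y j = 1 - X - Y \/ (y j = 0 /\ 1 - X - Y <= 0).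
  move=> j hj; have [/andP[a0 a1] hb] := hN j hj.
  have hb' : forall t, 0 <= t <= 1 ->
      t * (1 - ((X + Y - y j) + t)) <= y j * (1 - ((X + Y - y j) + y j)).
    move=> t ht; have := hb t ht; rewrite payoff_upd /payoff hS.
    by have -> : X + Y - y j + y j = X + Y by lra.
  have := Yj j hj => hyj.
  have hs1 : -1 <= X + Y - y j by lra.
  have hab : 0 <= y j <= 1 by rewrite a0 a1.
  case: (ltrP (X + Y - y j) 1) => hs.
  - left; have e := @br_lt _ _ _ hs1 hs hab hb'.
    rewrite e; lra.
  - right.
    have h01 : 0 <= (0:R) <= 1 by rewrite lexx ler01.
    have e := @br_ge _ _ _ hs a0 (hb' 0 h01).
    split => //; lra.
have kR0 : 0 <= (n - #|C|)%N%:R :> R := ler0n _ _.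
case: (ltrP 0 (1 - X - Y)) => ha.
- have all_a : forall j, j \notin C -> y j = 1 - X - Y.
    by move=> j /key [//|[_ ?]]; lra.
  have hY : Y = (n - #|C|)%N%:R * (1 - X - Y).
    rewrite -sum_compl_const; apply: eq_bigr => j; rewrite in_setC; exact: all_a.
  move=> j /all_a ->; rewrite natrD.
  have -> : 1 - X = (1 - X - Y) * ((n - #|C|)%N%:R + 1) by lra.
  rewrite mulfK //; apply/eqP; lra.
- have all0 : forall j, j \notin C -> y j = 0.
    move=> j hj; case: (key j hj) => [e|[]//].
    have [/andP[a0 _] _] := hN j hj; lra.
  have hY : Y = 0 by apply: big1 => j; rewrite in_setC; exact: all0.
  lra.
Qed.

Lemma NE_bwd (C : {set 'I_n}) (xC y : profile R n) :
  onUnitC C xC -> \sum_(i in C) xC i < 1 ->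
  (forall i, i \in C -> y i = xC i) ->
  (forall j, j \notin C -> y j = (1 - \sum_(i in C) xC i) / (n - #|C| + 1)%:R) ->
  isNE C xC y.
Proof.
move=> hU hX hC hN.
set X := \sum_(i in C) xC i in hX hN *.
have X0 : 0 <= X by apply: sumr_ge0 => i /hU /andP[].
set kR := (n - #|C|)%N%:R : R.
have kR0 : 0 <= kR := ler0n _ _.
set c := (1 - X) / (n - #|C| + 1)%:R in hN.
have hc : c * (kR + 1) = 1 - X by rewrite /c natrD divfK //; apply/eqP; lra.
have c0 : 0 < c by rewrite /c natrD divr_gt0 //; lra.
have c1 : c <= 1 by rewrite /c natrD ler_pdivrMr; lra.
have hYC : \sum_(i in C) y i = X by apply: eq_bigr => i /hC.
have hS : \sum_(j < n) y j = X + kR * c.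
  rewrite (sum_split y C) hYC -sum_compl_const; congr (_ + _).
  apply: eq_bigr => j; rewrite in_setC; exact: hN.
split => // j hj; rewrite hN //; split; first by apply/andP; split; lra.
move=> t /andP[t0 t1]; rewrite payoff_upd /payoff hS hN //.
have eX : X = 1 - c * (kR + 1) by lra.
rewrite eX.
have -> : t * (1 - (1 - c * (kR + 1) + kR * c - c + t)) = c * c - (t - c) ^+ 2 by ring.
have -> : c * (1 - (1 - c * (kR + 1) + kR * c)) = c * c by ring.
have := sqr_ge0 (t - c); lra.
Qed.

Lemma coalPay_eq (C : {set 'I_n}) (y : profile R n) :
  coalPay C y = (\sum_(i in C) y i) * (1 - \sum_(j < n) y j).
Proof. by rewrite /coalPay /payoff big_distrl. Qed.

Lemma coalPay_NE (C : {set 'I_n}) (xC y : profile R n) :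
  onUnitC C xC -> \sum_(i in C) xC i < 1 -> isNE C xC y ->
  coalPay C y = (\sum_(i in C) xC i) * (1 - \sum_(i in C) xC i) / (n - #|C| + 1)%:R.
Proof.
move=> hU hX hNE.
have hN := NE_fwd hU hX hNE.
case: hNE => hC _.
set X := \sum_(i in C) xC i in hX hN *.
set kR := (n - #|C|)%N%:R : R.
have kR0 : 0 <= kR := ler0n _ _.
set c := (1 - X) / (n - #|C| + 1)%:R in hN.
have hc : c * (kR + 1) = 1 - X by rewrite /c natrD divfK //; apply/eqP; lra.
have hYC : \sum_(i in C) y i = X by apply: eq_bigr => i /hC.
have hS : \sum_(j < n) y j = X + kR * c.
  rewrite (sum_split y C) hYC -sum_compl_const; congr (_ + _).
  apply: eq_bigr => j; rewrite in_setC; exact: hN.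
rewrite coalPay_eq hYC hS natrD.
have -> : 1 - (X + kR * c) = c by lra.
rewrite -mulrA; congr (_ * _); rewrite -hc mulfK //; apply/eqP; lra.
Qed.

End NE.

Lemma partii (R : realType) (n : nat) (C : {set 'I_n}) : (1 <= #|C| <= n.-1)%N ->
    (forall x : profile R n, isPCLE C x ->
       \sum_(i in C) x i = 1 / 2 /\
       (forall j, j \notin C -> x j = 1 / (2 * (n - #|C| + 1)%:R)) /\
       \sum_(j < n) x j = 1 - 1 / (2 * (n - #|C| + 1)%:R) /\
       ((forall i k, i \in C -> k \in C -> x i = x k) ->
          (forall i, i \in C -> x i = 1 / (2 * #|C|%:R) /\
                                payoff x i = piLC R n #|C|) /\
          (forall j, j \notin C -> payoff x j = piLNC R n #|C|))).
Proof.
move=> /andP[hm1 hm2] x [hU [hNE [v [[_ hvmin] [hvx hmax]]]]].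
set kR := (n - #|C|)%N%:R : R.
have kR0 : 0 <= kR := ler0n _ _.
have eK : (n - #|C| + 1)%:R = kR + 1 :> R by rewrite natrD.
set mR := #|C|%:R : R.
have mR1 : 1 <= mR by rewrite /mR ler1n.
pose xs : profile R n := fun _ => 1 / (2 * mR).
have hxsU : onUnitC C xs.
  move=> i _; rewrite /xs; apply/andP; split.
    by rewrite divr_ge0 //; lra.
  by rewrite ler_pdivrMr; lra.
have hxsS : \sum_(i in C) xs i = 1 / 2.
  rewrite sumr_const -mulr_natr -/mR /xs; field; lra.
have hxs1 : \sum_(i in C) xs i < 1 by rewrite hxsS; lra.
pose ys : profile R n := fun i => if i \in C then xs i
   else (1 - \sum_(i in C) xs i) / (n - #|C| + 1)%:R.
have hys : isNE C xs ys.
  apply: NE_bwd => // i hi; rewrite /ys ?hi //; by rewrite (negbTE hi).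
set w := (1 / 2) * (1 - 1 / 2) / (kR + 1).
have hw : tildeIs C xs w.
  split.
    exists ys; split => //; by rewrite (coalPay_NE hxsU hxs1 hys) hxsS eK.
  by move=> y hy; rewrite (coalPay_NE hxsU hxs1 hy) hxsS eK.
have hwv := hmax xs hxsU w hw.
have w0 : 0 < w by rewrite /w divr_gt0 //; lra.
set X := \sum_(i in C) x i.
have X0 : 0 <= X by apply: sumr_ge0 => i /hU /andP[].
have hX1 : X < 1.
  rewrite ltNge; apply/negP => hX.
  have hY : 0 <= \sum_(j in ~:C) x j.
    apply: sumr_ge0 => j; rewrite in_setC => hj.
    by have [/andP[]] := hNE.2 j hj.
  move: hvx; rewrite coalPay_eq (sum_split x C) -/X => hv.
  have : X * (1 - (X + \sum_(j in ~:C) x j)) <= 0.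
    rewrite mulr_ge0_le0 //; lra.
  lra.
have hv : v = X * (1 - X) / (kR + 1) by rewrite -hvx (coalPay_NE hU hX1 hNE) eK.
have hXh : X = 1 / 2.
  move: hwv; rewrite hv /w frac_le; try lra.
  move=> h.
  have h' : 1 / 2 * (1 - 1 / 2) <= X * (1 - X).
    by rewrite -(@ler_pM2r _ (kR + 1)) //; lra.
  have := sqr_ge0 (X - 1/2). nra.
have hxj : forall j, j \notin C -> x j = 1 / (2 * (n - #|C| + 1)%:R).
  move=> j hj; rewrite (NE_fwd hU hX1 hNE j hj) -/X hXh eK; field; lra.
have hS : \sum_(j < n) x j = 1 - 1 / (2 * (n - #|C| + 1)%:R).
  rewrite (sum_split x C) -/X.
  rewrite (eq_bigr (fun _ => 1 / (2 * (n - #|C| + 1)%:R))); last first.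
    by move=> j; rewrite in_setC; exact: hxj.
  rewrite sum_compl_const -/kR hXh eK; field; lra.
split => //; split => //; split => //.
move=> heq; split.
- move=> i hi.
  have hXi : X = x i * mR.
    rewrite /X (eq_bigr (fun _ => x i)); last by move=> k hk; exact: heq.
    by rewrite sumr_const -mulr_natr.
  have hxi : x i = 1 / (2 * mR).
    rewrite hXh in hXi; apply/eqP; rewrite eq_sym -subr_eq0; apply/eqP.
    have -> : 1 / (2 * mR) - x i = (1/2 - x i * mR) / mR by field; lra.
    by rewrite -hXi subrr mul0r.
  split => //.
  rewrite /payoff hS hxi /piLC eK -/mR; field; lra.
- move=> j hj; rewrite /payoff hS hxj // /piLNC eK; field; lra.
Qed.

Ltac pos := repeat (apply: mulr_gt0 || apply: exprn_gt0); lra.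

Lemma partiii (R : realType) (n m : nat) : (2 <= m <= n.-1)%N ->
     (stable R n m <->
      ((n - m + 1)%:R / (n - m)%:R <= (m + 1)%:R / (n - m + 1)%:R :> R /\
       m%:R / (n - m + 2)%:R <= (n - m + 2)%:R / (n - m + 1)%:R :> R)).
Proof.
move=> hm; move: (hm) => /andP[hm1 hm2].
have e1 : (n - m.+1 + 1 = n - m)%N by lia.
have e2 : (n - m.-1 + 1 = n - m + 2)%N by lia.
have hp : (1 <= n - m)%N by lia.
rewrite /stable /piLC /piLNC e1 e2 !natrD.
have eM : m.+1%:R = m%:R + 1 :> R by rewrite -addn1 natrD.
rewrite eM.
set P := (n - m)%N%:R : R.
set M := m%:R : R.
have P1 : 1 <= P by rewrite /P ler1n.
have M2 : 2 <= M by rewrite /M (ler_nat _ 2).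
rewrite (@frac_le _ 1 _ 1); [|pos|pos].
rewrite (@frac_le _ 1 _ 1); [|pos|pos].
rewrite frac_le; [|pos|pos].
rewrite frac_le; [|pos|pos].
rewrite !mul1r !expr2.
split.
- move=> [_ [h1 h2]]; split; lra.
- move=> [h1 h2]; split => //; split; lra.
Qed.

Lemma stable85 (R : realType) : stable R 8 5.
Proof.
split => //; rewrite /piLC /piLNC /=.
rewrite (_ : (8 - 6 + 1)%N = 3%N) // (_ : (8 - 5 + 1)%N = 4%N) // (_ : (8 - 4 + 1)%N = 5%N) //.
by split; rewrite frac_le; lra.
Qed.

Unset Implicit Arguments.
Theorem mainTheorem11 (R : realType) (n : nat) (hn : (3 <= n)%N) :
  (forall (C : {set 'I_n}), (1 <= #|C| <= n.-1)%N ->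
    (* (i) *)
    (forall xC : profile R n, onUnitC C xC -> \sum_(i in C) xC i < 1 ->
       forall y : profile R n,
         isNE C xC y <->
         ((forall i, i \in C -> y i = xC i) /\
          (forall j, j \notin C ->
             y j = (1 - \sum_(i in C) xC i) / (n - #|C| + 1)%:R)))
    /\
    (* (ii) *)
    (forall x : profile R n, isPCLE C x ->
       \sum_(i in C) x i = 1 / 2 /\
       (forall j, j \notin C -> x j = 1 / (2 * (n - #|C| + 1)%:R)) /\
       \sum_(j < n) x j = 1 - 1 / (2 * (n - #|C| + 1)%:R) /\
       ((forall i k, i \in C -> k \in C -> x i = x k) ->
          (forall i, i \in C -> x i = 1 / (2 * #|C|%:R) /\
                                payoff x i = piLC R n #|C|) /\
          (forall j, j \notin C -> payoff x j = piLNC R n #|C|))))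
  /\
  (* (iii) *)
  (forall m : nat, (2 <= m <= n.-1)%N ->
     (stable R n m <->
      ((n - m + 1)%:R / (n - m)%:R <= (m + 1)%:R / (n - m + 1)%:R :> R /\
       m%:R / (n - m + 2)%:R <= (n - m + 2)%:R / (n - m + 1)%:R :> R)))
  /\ stable R 8 5.
Proof.
split.
  move=> C hC; split; last exact: partii.
  move=> xC hU hX y; split.
    move=> hNE; split; first by case: hNE.
    exact: NE_fwd hU hX hNE.
  by move=> [h1 h2]; apply: NE_bwd.
split; first by move=> m hm; exact: partiii.
exact: stable85.
Qed.
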